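(* Let $\theta:=\sqrt{5-\pi^2/3}$ and define, for $(Z_1,Z_2)\in\mathbb{R}^2$ and $\delta>0$, $$E(Z_1,Z_2):=Z_1^2+Z_2^2+2Z_1,$$ $$P_\delta(Z_1,Z_2):=(1+\delta)(Z_1^2+Z_2^2)+2Z_1Z_2^2+\frac23Z_1^3+6\delta\big(|Z_1|Z_2^2+|Z_1|^3\big)-2\Big(1-\delta-\Big(\frac23+\delta\Big)\frac{21}{20}\theta Z_2\Big)Z_2^2.$$ There exist $\delta_2,\delta_3>0$ such that for any $0<\delta<\delta_2$: if $(Z_1,Z_2)\in\mathbb{R}^2$ satisfies $|E(Z_1,Z_2)|\le\delta_3$, then $$P_\delta(Z_1,Z_2)-|E(Z_1,Z_2)|^2\le0.$$ *)

(* Defs.v *)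
From Stdlib Require Import Reals Lra.
Open Scope R_scope.

Definition theta : R := sqrt (5 - PI ^ 2 / 3).

Definition E (Z1 Z2 : R) : R := Z1 ^ 2 + Z2 ^ 2 + 2 * Z1.

Definition P (delta Z1 Z2 : R) : R :=
  (1 + delta) * (Z1 ^ 2 + Z2 ^ 2) + 2 * Z1 * Z2 ^ 2 + (2 / 3) * Z1 ^ 3
  + 6 * delta * (Rabs Z1 * Z2 ^ 2 + Rabs Z1 ^ 3)
  - 2 * (1 - delta - (2 / 3 + delta) * (21 / 20) * theta * Z2) * Z2 ^ 2.

(* Main.v *)
Require Import Defs.
From Stdlib Require Import Reals Lra Psatz.
Open Scope R_scope.
Definition Gp (u e : R) := let s := e + 2*u - u^2 in
  u^2*(u^2 - 10/3*u + 299/100) + s*(29/100 - 2*u + 2*u^2 - 21/100*s).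
Lemma bern4 (a b u c0 c1 c2 c3 c4 : R) : 0 <= c0 -> 0 <= c1 -> 0 <= c2 -> 0 <= c3 -> 0 <= c4 ->
  a <= u <= b ->
  0 <= c0*(b-u)^4 + c1*(u-a)*(b-u)^3 + c2*(u-a)^2*(b-u)^2 + c3*(u-a)^3*(b-u) + c4*(u-a)^4.
Proof.
  intros H0 H1 H2 H3 H4 [Ha Hb].
  assert (A: 0 <= u - a) by lra. assert (B: 0 <= b - u) by lra.
  repeat apply Rplus_le_le_0_compat; repeat apply Rmult_le_pos; try apply pow_le; auto; lra.
Qed.
Lemma gp_0 (u:R) : (1/20) <= u <= (21/40) -> 0 <= Gp u (1/50).
Proof. intros Hu. replace (Gp u (1/50)) with ((273628/514425)*((21/40)-u)^4 + (545048/102885)*(u-(1/20))*((21/40)-u)^3 + (974334/171475)*(u-(1/20))^2*((21/40)-u)^2 + (153362/34295)*(u-(1/20))^3*((21/40)-u) + (1608781/685900)*(u-(1/20))^4) by (unfold Gp; field).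
  apply bern4; lra. Qed.
Lemma gp_1 (u:R) : (21/40) <= u <= (1) -> 0 <= Gp u (1/50).
Proof. intros Hu. replace (Gp u (1/50)) with ((1608781/685900)*((1)-u)^4 + (2450752/171475)*(u-(21/40))*((1)-u)^3 + (1205232/34295)*(u-(21/40))^2*((1)-u)^2 + (19972352/514425)*(u-(21/40))^3*((1)-u) + (7417088/514425)*(u-(21/40))^4) by (unfold Gp; field).
  apply bern4; lra. Qed.
Lemma gp_2 (u:R) : (1) <= u <= (39/20) -> 0 <= Gp u (1/50).
Proof. intros Hu. replace (Gp u (1/50)) with ((463568/514425)*((39/20)-u)^4 + (3066272/514425)*(u-(1))*((39/20)-u)^3 + (2361132/171475)*(u-(1))^2*((39/20)-u)^2 + (2033416/171475)*(u-(1))^3*((39/20)-u) + (1329469/685900)*(u-(1))^4) by (unfold Gp; field).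
  apply bern4; lra. Qed.
Lemma gm_0 (u:R) : (1/20) <= u <= (21/40) -> 0 <= Gp u (-1/50).
Proof. intros Hu. replace (Gp u (-1/50)) with ((4015828/9774075)*((21/40)-u)^4 + (56524648/9774075)*(u-(1/20))*((21/40)-u)^3 + (969034/130321)*(u-(1/20))^2*((21/40)-u)^2 + (19673838/3258025)*(u-(1/20))^3*((21/40)-u) + (36034871/13032100)*(u-(1/20))^4) by (unfold Gp; field).
  apply bern4; lra. Qed.
Lemma gm_1 (u:R) : (21/40) <= u <= (1) -> 0 <= Gp u (-1/50).
Proof. intros Hu. replace (Gp u (-1/50)) with ((36034871/13032100)*((1)-u)^4 + (52395904/3258025)*(u-(21/40))*((1)-u)^3 + (122392048/3258025)*(u-(21/40))^2*((1)-u)^2 + (390764288/9774075)*(u-(21/40))^3*((1)-u) + (141923072/9774075)*(u-(21/40))^4) by (unfold Gp; field).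
  apply bern4; lra. Qed.
Lemma gm_2 (u:R) : (1) <= u <= (39/20) -> 0 <= Gp u (-1/50).
Proof. intros Hu. replace (Gp u (-1/50)) with ((8870192/9774075)*((39/20)-u)^4 + (57596768/9774075)*(u-(1))*((39/20)-u)^3 + (8744972/651605)*(u-(1))^2*((39/20)-u)^2 + (37107208/3258025)*(u-(1))^3*((39/20)-u) + (22729319/13032100)*(u-(1))^4) by (unfold Gp; field).
  apply bern4; lra. Qed.
Lemma Gp_mid (u e : R) : 1/20 <= u <= 39/20 -> -1/50 <= e <= 1/50 -> 0 <= Gp u e.
Proof.
  intros Hu He.
  assert (Hp: 0 <= Gp u (1/50)).
  { destruct (Rle_lt_dec u (21/40)). apply gp_0; lra.
    destruct (Rle_lt_dec u 1). apply gp_1; lra. apply gp_2; lra. }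
  assert (Hm: 0 <= Gp u (-1/50)).
  { destruct (Rle_lt_dec u (21/40)). apply gm_0; lra.
    destruct (Rle_lt_dec u 1). apply gm_1; lra. apply gm_2; lra. }
  replace (Gp u e) with (((1/50 - e) * Gp u (-1/50) + (e + 1/50) * Gp u (1/50)) * 25 + 21/100*(1/50-e)*(e+1/50)) by (unfold Gp; field).
  assert (0 <= 1/50 - e) by lra. assert (0 <= e + 1/50) by lra.
  assert (0 <= (1/50 - e) * Gp u (-1/50)) by (apply Rmult_le_pos; lra).
  assert (0 <= (e + 1/50) * Gp u (1/50)) by (apply Rmult_le_pos; lra).
  assert (0 <= (1/50-e)*(e+1/50)) by (apply Rmult_le_pos; lra).
  lra.
Qed.
Lemma Gp_all (u e : R) : -1/50 <= e <= 1/50 -> 0 <= e + 2*u - u^2 -> 0 <= Gp u e.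
Proof.
  intros He Hs.
  destruct (Rle_lt_dec u (1/20)) as [H1|H1].
  - assert (Hl: -1/100 <= u) by nra.
    unfold Gp. set (s := e + 2*u - u^2) in *.
    assert (s <= 1/50 + 2*u) by (unfold s; nra).
    assert (0 <= u^2 - 10/3*u + 299/100) by nra.
    assert (0 <= 29/100 - 2*u + 2*u^2 - 21/100*s) by nra.
    assert (0 <= u^2) by nra.
    apply Rplus_le_le_0_compat; apply Rmult_le_pos; lra.
  - destruct (Rle_lt_dec u (39/20)) as [H2|H2].
    + apply Gp_mid; lra.
    + assert (Hl: u <= 201/100) by nra.
      unfold Gp. set (s := e + 2*u - u^2) in *.
      assert (s <= 1/50 + u*(2-u)) by (unfold s; nra).
      assert (u*(2-u) <= 1/10) by nra.
      assert (0 <= u^2 - 10/3*u + 299/100) by nra.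
      assert (0 <= 29/100 - 2*u + 2*u^2 - 21/100*s) by nra.
      assert (0 <= u^2) by nra.
      apply Rplus_le_le_0_compat; apply Rmult_le_pos; lra.
Qed.
Lemma PI_lb : 3139/1000 <= PI.
Proof.
  destruct (PI_2_3_7_ineq 1) as [H _].
  simpl in H. unfold tg_alt, PI_2_3_7_tg, Ratan_seq in H. simpl in H.
  lra.
Qed.

Lemma theta_bd : 0 <= theta <= 131/100.
Proof.
  unfold theta. split. apply sqrt_pos.
  rewrite <- (sqrt_pow2 (131/100)) by lra.
  apply sqrt_le_1_alt. pose proof PI_lb. nra.
Qed.

Theorem lemma2p6 :
  exists delta2 delta3 : R, 0 < delta2 /\ 0 < delta3 /\
    forall delta : R, 0 < delta < delta2 ->
      forall Z1 Z2 : R, Rabs (E Z1 Z2) <= delta3 ->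
        P delta Z1 Z2 - (Rabs (E Z1 Z2)) ^ 2 <= 0.
Proof.
  exists (1/2000), (1/50). split; [lra|]. split; [lra|].
  intros d Hd Z1 Z2 HE.
  rewrite pow2_abs.
  set (e := E Z1 Z2) in *.
  assert (He : e = Z1^2 + Z2^2 + 2*Z1) by reflexivity.
  assert (HE2 : -1/50 <= e <= 1/50) by (pose proof (Rle_abs e); pose proof (Rle_abs (-e)); rewrite Rabs_Ropp in *; lra). clear HE. rename HE2 into HE.
  destruct theta_bd as [Th0 Th1].
  set (c := 2*(2/3+d)*(21/20)*theta).
  assert (Hc0 : 0 <= c) by (unfold c; nra).
  assert (Hc1 : c <= 184/100).
  { unfold c. assert (0 <= (2/3 + d)) by lra. nra. }
  assert (HP : P d Z1 Z2 = (1+d)*(Z1^2+Z2^2) + 2*Z1*Z2^2 + 2/3*Z1^3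
      + 6*d*(Rabs Z1 * Z2^2 + Rabs Z1 * Z1^2) - 2*(1-d)*Z2^2 + c*Z2^3).
  { unfold P, c. replace (Rabs Z1 ^ 3) with (Rabs Z1 * Rabs Z1 ^ 2) by ring.
    rewrite pow2_abs. ring. }
  rewrite HP; clear HP.
  assert (HZ1 : -201/100 <= Z1 <= 1/100) by nra.
  assert (HA : Rabs Z1 <= 201/100) by (apply Rabs_le; lra).
  assert (HA0 : 0 <= Rabs Z1) by apply Rabs_pos.
  assert (HZ1s : 0 <= Z1^2) by nra.
  assert (HZ2s : 0 <= Z2^2) by nra.
  assert (Hi : d*(Z1^2+Z2^2) + 6*d*(Rabs Z1 * Z2^2 + Rabs Z1 * Z1^2) + 2*d*Z2^2
               <= 1/100*(Z1^2+Z2^2)).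
  { assert (Rabs Z1 * Z2^2 <= 201/100 * Z2^2) by nra.
    assert (Rabs Z1 * Z1^2 <= 201/100 * Z1^2) by nra.
    assert (d*(Rabs Z1 * Z2^2 + Rabs Z1 * Z1^2) <= d*(201/100*(Z1^2+Z2^2))) by nra.
    nra. }
  set (t := Rabs Z2).
  assert (Ht0 : 0 <= t) by apply Rabs_pos.
  assert (Ht2 : Z2^2 = t^2) by (unfold t; now rewrite pow2_abs).
  assert (Hii : c*Z2^3 <= 7/10*Z2^2 + 121/100*Z2^4).
  { assert (c*Z2^3 <= c*t^3).
    { apply Rmult_le_compat_l; auto.
      replace (Z2^3) with (Z2*Z2^2) by ring. replace (t^3) with (t*t^2) by ring.
      rewrite Ht2. apply Rmult_le_compat_r. nra. unfold t; apply Rle_abs. }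
    assert (c*t^3 <= 184/100*t^3) by (apply Rmult_le_compat_r; [apply pow_le|]; lra).
    assert (0 <= t^2*(7/10 - 184/100*t + 121/100*t^2)).
    { apply Rmult_le_pos. nra. pose proof (pow2_ge_0 (11/10*t - 92/110)). nra. }
    rewrite Ht2. replace (Z2^4) with ((Z2^2)^2) by ring. rewrite Ht2. nra. }
  assert (HG : 0 <= Gp (-Z1) e).
  { apply Gp_all. lra. rewrite He. nra. }
  unfold Gp in HG. rewrite He in HG |- *.
  nra.
Qed.
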